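(* Let $S$ be a semigroup with an ideal $I$, and let $\alpha_1,\dots,\alpha_n$ be congruences of $S$ with $\alpha_j\le\rho_I$ for all $j$. Then $[\alpha_1,\dots,\alpha_n]_S$ is the congruence of $S$ generated by $[\alpha_1|_I,\dots,\alpha_n|_I]_I$ (the commutator computed in the semigroup $I$ of the restricted congruences $\alpha_j|_I=\alpha_j\cap(I\times I)$).
   Context: For an ideal $I$ of $S$, the Rees congruence is $\rho_I=(I\times I)\cup\{(s,s):s\in S\}$. For an algebra $\mathbf A$ and congruences $\alpha_1,\dots,\alpha_n$, $M_{\mathbf A}(\alpha_1,\dots,\alpha_n)$ is the subalgebra of $\mathbf A^{\{0,1\}^n}$ generated by all $g$ such that for some $i$ and $(a,b)\in\alpha_i$, $g(x)=a$ if $x_i=0$ and $g(x)=b$ if $x_i=1$; the commutator $[\alpha_1,\dots,\alpha_n]_{\mathbf A}$ is the smallest congruence $\delta$ of $\mathbf A$ such that for all $f\in M_{\mathbf A}(\alpha_1,\dots,\alpha_n)$: if $(f(x0),f(x1))\in\delta$ for all $x\in\{0,1\}^{n-1}\setminus\{(1,\dots,1)\}$, then $(f(1,\dots,1,0),f(1,\dots,1,1))\in\delta$. *)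

(* Defs.v *)
From mathcomp Require Import all_boot.
Set Implicit Arguments. Unset Strict Implicit. Unset Printing Implicit Defensive.

Definition relP (T : Type) := T -> T -> Prop.

Definition rle (T : Type) (R1 R2 : relP T) : Prop :=
  forall a b, R1 a b -> R2 a b.

Definition is_cong (T : Type) (op : T -> T -> T) (R : relP T) : Prop :=
  [/\ (forall a, R a a),
      (forall a b, R a b -> R b a),
      (forall a b c, R a b -> R b c -> R a c)
    & (forall a b c d, R a b -> R c d -> R (op a c) (op b d))].

Definition cong_gen (T : Type) (op : T -> T -> T) (R : relP T) : relP T :=
  fun a b => forall D, is_cong op D -> rle R D -> D a b.

Definition rees (T : Type) (I : T -> Prop) : relP T :=
  fun a b => (I a /\ I b) \/ a = b.

(* M_A(alpha_0,...,alpha_n) : subalgebra of A^{ {0,1}^(n+1) } generated by the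
   generators g(x) = if x_i = 1 then b else a, (a,b) in alpha_i. *)
Inductive inM (T : Type) (op : T -> T -> T) (n : nat) (al : 'I_n.+1 -> relP T)
  : (('I_n.+1 -> bool) -> T) -> Prop :=
| inM_gen (i : 'I_n.+1) (a b : T) : al i a b -> inM op al (fun x => if x i then b else a)
| inM_op f g : inM op al f -> inM op al g -> inM op al (fun x => op (f x) (g x)).

(* the point (x, b) of {0,1}^(n+1), b placed in the last coordinate *)
Definition cube_ext (n : nat) (x : 'I_n -> bool) (b : bool) : 'I_n.+1 -> bool :=
  fun i => match unlift ord_max i with Some j => x j | None => b end.

Definition term_cond (T : Type) (op : T -> T -> T) (n : nat) (al : 'I_n.+1 -> relP T)
  (D : relP T) : Prop :=
  forall f, inM op al f ->
    (forall x : 'I_n -> bool, (exists j, x j = false) ->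
        D (f (cube_ext x false)) (f (cube_ext x true))) ->
    D (f (cube_ext (fun _ => true) false)) (f (cube_ext (fun _ => true) true)).

Definition commutator (T : Type) (op : T -> T -> T) (n : nat) (al : 'I_n.+1 -> relP T)
  : relP T :=
  fun a b => forall D, is_cong op D -> term_cond op al D -> D a b.

Definition ideal_op (T : Type) (op : T -> T -> T) (I : T -> Prop)
  (hIl : forall s t, I t -> I (op s t)) : sig I -> sig I -> sig I :=
  fun x y => exist I (op (proj1_sig x) (proj1_sig y)) (hIl _ _ (proj2_sig y)).

Definition restrict (T : Type) (I : T -> Prop) (R : relP T) : relP (sig I) :=
  fun x y => R (proj1_sig x) (proj1_sig y).

Definition lift_rel (T : Type) (I : T -> Prop) (R : relP (sig I)) : relP T :=
  fun a b => exists x y : sig I, [/\ proj1_sig x = a, proj1_sig y = b & R x y].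

(* Main.v *)
Require Import Defs.
From mathcomp Require Import all_boot.
From Stdlib Require Import FunctionalExtensionality ProofIrrelevance.

Section General.
Variables (T : Type) (o : T -> T -> T) (m : nat) (be : 'I_m.+1 -> relP T).

Lemma comm_cong : is_cong o (commutator o be).
Proof.
split.
- by move=> a D [r _ _ _] _; apply r.
- by move=> a b h D HD HT; case: (HD) => _ s _ _; apply s; apply h.
- by move=> a b c h1 h2 D HD HT; case: (HD) => _ _ t _; apply: t (h1 D HD HT) (h2 D HD HT).
- by move=> a b c d h1 h2 D HD HT; case: (HD) => _ _ _ c'; apply: c' (h1 D HD HT) (h2 D HD HT).
Qed.

Lemma comm_tc : term_cond o be (commutator o be).
Proof.
move=> f Hf H D HD HT; apply: (HT f Hf) => x hx; exact: H x hx D HD HT.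
Qed.
End General.

Section Ideal.
Variables (S : Type) (op : S -> S -> S) (hassoc : associative op) (I : S -> Prop)
 (hIl : forall s t, I t -> I (op s t)) (hIr : forall s t, I s -> I (op s t))
 (n : nat) (al : 'I_n.+1 -> relP S) (hcong : forall j, is_cong op (al j))
 (hle : forall j, rle (al j) (rees I)).

Local Notation opI := (ideal_op hIl).
Local Notation alI := (fun j => @restrict S I (al j)).
Local Notation K := (commutator opI alI).

Lemma sval_inj (x y : sig I) : proj1_sig x = proj1_sig y -> x = y.
Proof. case: x y => [x px] [y py] /= e; subst y; by rewrite (proof_irrelevance _ px py). Qed.

Definition omul (s : option S) a := if s is Some s then op s a else a.
Definition omulr a (t : option S) := if t is Some t then op a t else a.
Lemma omul_I s a : I a -> I (omul s a). Proof. case: s => //= s; auto. Qed.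
Lemma omulr_I t a : I a -> I (omulr a t). Proof. case: t => //= t; auto. Qed.
Definition lmul s (c : sig I) : sig I :=
  exist I (omul s (proj1_sig c)) (@omul_I s _ (proj2_sig c)).
Definition rmul t (c : sig I) : sig I :=
  exist I (omulr (proj1_sig c) t) (@omulr_I t _ (proj2_sig c)).

Lemma al_omul j s a b : al j a b -> al j (omul s a) (omul s b).
Proof. case: s => //= s h; have [r _ _ c] := hcong j; apply: c (r s) h. Qed.
Lemma al_omulr j t a b : al j a b -> al j (omulr a t) (omulr b t).
Proof. case: t => //= t h; have [r _ _ c] := hcong j; apply: c h (r t). Qed.

Lemma inM_lmul s F : inM opI alI F -> inM opI alI (fun x => lmul s (F x)).
Proof.
elim=> [i a b hab | f g Hf IHf Hg IHg].
- have -> : (fun x => lmul s (if x i then b else a)) =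
            (fun x => if x i then lmul s b else lmul s a).
    by apply functional_extensionality => x; case: (x i).
  apply: inM_gen; rewrite /restrict /=; exact: al_omul.
- have -> : (fun x => lmul s (opI (f x) (g x))) = (fun x => opI (lmul s (f x)) (g x)).
    by apply functional_extensionality => x; apply sval_inj; destruct s; simpl; rewrite ?hassoc.
  exact: (inM_op IHf Hg).
Qed.

Lemma inM_rmul t F : inM opI alI F -> inM opI alI (fun x => rmul t (F x)).
Proof.
elim=> [i a b hab | f g Hf IHf Hg IHg].
- have -> : (fun x => rmul t (if x i then b else a)) =
            (fun x => if x i then rmul t b else rmul t a).
    by apply functional_extensionality => x; case: (x i).
  apply: inM_gen; rewrite /restrict /=; exact: al_omulr.
- have -> : (fun x => rmul t (opI (f x) (g x))) = (fun x => opI (f x) (rmul t (g x))).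
    by apply functional_extensionality => x; apply sval_inj; destruct t; simpl; rewrite ?hassoc.
  exact: (inM_op Hf IHg).
Qed.

Lemma lmul0 c : lmul None c = c. Proof. exact: sval_inj. Qed.
Lemma rmul0 c : rmul None c = c. Proof. exact: sval_inj. Qed.

Definition Kp (c d : sig I) := forall s t, K (rmul t (lmul s c)) (rmul t (lmul s d)).

Lemma eq1 c e s t : rmul (Some (omulr (proj1_sig e) t)) (lmul s c) = rmul t (lmul s (opI c e)).
Proof. apply sval_inj; case: s t => [s|] [t|] /=; by rewrite ?hassoc. Qed.
Lemma eq2 d e s t : rmul t (lmul (Some (omul s (proj1_sig d))) e) = rmul t (lmul s (opI d e)).
Proof. apply sval_inj; case: s t => [s|] [t|] /=; by rewrite ?hassoc. Qed.

Lemma Kp_cong : is_cong opI Kp.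
Proof.
have [r sy tr co] := @comm_cong _ opI _ alI.
split.
- by move=> a s t; apply r.
- by move=> a b h s t; apply sy.
- by move=> a b c h1 h2 s t; apply: tr (h1 s t) (h2 s t).
- move=> c d e f Hcd Hef s t.
  apply: (tr _ (rmul t (lmul s (opI d e)))).
  + rewrite -(eq1 c e) -(eq1 d e); exact: Hcd.
  + rewrite -(eq2 d e) -(eq2 d f); exact: Hef.
Qed.

Lemma Kp_tc : term_cond opI alI Kp.
Proof.
move=> f Hf H s t.
apply: (@comm_tc _ opI _ alI (fun x => rmul t (lmul s (f x)))).
  exact: (@inM_rmul t _ (@inM_lmul s _ Hf)).
by move=> x hx; exact: H x hx s t.
Qed.

Lemma K_inv c d : K c d -> Kp c d.
Proof. move=> h; exact: h Kp Kp_cong Kp_tc. Qed.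

Definition R (a b : S) := lift_rel K a b \/ a = b.

Lemma R_cong : is_cong op R.
Proof.
have [r sy tr co] := @comm_cong _ opI _ alI.
split.
- by move=> a; right.
- move=> a b [[x [y [ex ey h]]]|->]; last by right.
  by left; exists y, x; split => //; apply sy.
- move=> a b c [[x [y [ex ey h]]]|->] //.
  move=> [[x' [y' [ex' ey' h']]]|<-]; last by left; exists x, y.
  left; exists x, y'; split => //.
  have e : y = x' by apply sval_inj; rewrite ey ex'.
  by subst x'; apply: tr h h'.
- move=> a b c d [[x [y [ex ey h]]]|<-] [[z [w [ez ew h']]]|<-].
  + by left; exists (opI x z), (opI y w); split => /=; [rewrite ex ez|rewrite ey ew|apply co].
  + left; exists (rmul (Some c) x), (rmul (Some c) y); split => /=; [rewrite ex|rewrite ey|].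
    * by [].
    * by [].
    have := @K_inv _ _ h None (Some c); by rewrite !lmul0.
  + left; exists (lmul (Some a) z), (lmul (Some a) w); split => /=; [rewrite ez|rewrite ew|].
    * by [].
    * by [].
    have := @K_inv _ _ h' (Some a) None; by rewrite !rmul0.
  + by right.
Qed.

Lemma dich F : inM op al F ->
  (exists c, forall x, F x = c) \/
  (exists f', inM opI alI f' /\ forall x, proj1_sig (f' x) = F x).
Proof.
elim=> [i a b hab | f g _ [[c Hc]|[f' [Hf' Ef]]] _ [[d Hd]|[g' [Hg' Eg]]]].
- case: (hle i a b hab) => [[Ia Ib]|e].
  + right; exists (fun x => if x i then exist I b Ib else exist I a Ia); split.
      by apply: inM_gen.
    by move=> x; case: (x i).
  + by left; exists a; move=> x; case: (x i).
- by left; exists (op c d) => x; rewrite Hc Hd.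
- right; exists (fun x => lmul (Some c) (g' x)); split; first exact: inM_lmul.
  by move=> x /=; rewrite Hc Eg.
- right; exists (fun x => rmul (Some d) (f' x)); split; first exact: inM_rmul.
  by move=> x /=; rewrite Hd Ef.
- right; exists (fun x => opI (f' x) (g' x)); split; first exact: inM_op.
  by move=> x /=; rewrite Ef Eg.
Qed.

Lemma R_tc : term_cond op al R.
Proof.
have [r sy tr co] := @comm_cong _ opI _ alI.
move=> f Hf H.
case: (@dich _ Hf) => [[c Hc]|[f' [Hf' Ef]]].
  by right; rewrite !Hc.
left; exists (f' (cube_ext (fun _ => true) false)), (f' (cube_ext (fun _ => true) true)).
split => //.
apply: (@comm_tc _ opI _ alI _ Hf') => x hx.
case: (H x hx) => [[u [v [eu ev h]]]|e].
- have -> : f' (cube_ext x false) = u by apply sval_inj; rewrite Ef eu.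
  have -> : f' (cube_ext x true) = v by apply sval_inj; rewrite Ef ev.
  exact: h.
- have -> : f' (cube_ext x false) = f' (cube_ext x true) by apply sval_inj; rewrite !Ef.
  exact: r.
Qed.

Lemma inM_val F : inM opI alI F -> inM op al (fun x => proj1_sig (F x)).
Proof.
elim=> [i a b hab | f g Hf IHf Hg IHg].
- have -> : (fun x => proj1_sig (if x i then b else a)) =
            (fun x => if x i then proj1_sig b else proj1_sig a).
    by apply functional_extensionality => x; case: (x i).
  by apply: inM_gen.
- exact: (inM_op IHf IHg).
Qed.

Lemma K_sub x y : K x y -> commutator op al (proj1_sig x) (proj1_sig y).
Proof.
move=> h; apply: (h (fun u v => commutator op al (proj1_sig u) (proj1_sig v))).
- have [r sy tr co] := @comm_cong _ op _ al.
  split; [move=> a; apply r|move=> a b; apply sy|move=> a b c; apply tr|].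
  move=> a b c d; apply co.
- move=> f Hf H; exact: (@comm_tc _ op _ al _ (@inM_val _ Hf) H).
Qed.

End Ideal.

Theorem lemma2p2 (S : Type) (op : S -> S -> S) (hassoc : associative op)
  (I : S -> Prop) (hI0 : exists x, I x)
  (hIl : forall s t, I t -> I (op s t)) (hIr : forall s t, I s -> I (op s t))
  (n : nat) (al : 'I_n.+1 -> relP S)
  (hcong : forall j, is_cong op (al j))
  (hle : forall j, rle (al j) (rees I)) :
  forall a b,
    commutator op al a b <->
    cong_gen op (lift_rel (commutator (ideal_op hIl) (fun j => @restrict S I (al j)))) a b.
Proof.
move=> a b; split.
- move=> H D HD Hsub.
  have Rab := H _ (@R_cong S op hassoc I hIl hIr n al hcong) (@R_tc S op hassoc I hIl hIr n al hcong hle).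
  case: Rab => [l|->]; first exact: Hsub l.
  by case: HD.
- move=> H; apply: H; first exact: comm_cong.
  move=> u v [x [y [ex ey Kxy]]]; subst u v.
  exact: K_sub.
Qed.
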